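(* Let $X^*$ be an optimal solution of the program defining $\vartheta^+(G)$. Then $X^*e=\vartheta^+(G)\operatorname{diag}(X^* )$.
   Context: Let $G$ be a simple graph with vertex set $V=\{1,\dots,n\}$ and edge set $E$; $e$ is the all-ones vector and $X\geq 0$ means entrywise nonnegativity. Schrijver's number is $$\vartheta^+(G)=\max\ \operatorname{trace}(X)\ \text{ s.t. } X-xx^T\succeq 0,\ \operatorname{diag}(X)=x,\ X_{i,j}=0\ \forall [i,j]\in E,\ X\geq 0,$$ which equals $\max \langle J,X\rangle$ s.t. $X\succeq 0$, $\operatorname{trace}(X)=1$, $X_{i,j}=0$ for $[i,j]\in E$, $X\geq 0$, where $J$ is the all-ones matrix. *)

(* Defs.v *)
From mathcomp Require Import all_boot all_order all_algebra.
Set Implicit Arguments. Unset Strict Implicit. Unset Printing Implicit Defensive.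
Import Order.TTheory GRing.Theory Num.Theory.
Local Open Scope ring_scope.

Definition psd (R : realFieldType) (n : nat) (A : 'M[R]_n) : Prop :=
  A^T = A /\ forall v : 'cV[R]_n, 0 <= (v^T *m A *m v) 0 0.

Definition simple_graph (n : nat) (E : rel 'I_n) : Prop :=
  symmetric E /\ irreflexive E.

Definition ones (R : realFieldType) (n : nat) : 'cV[R]_n := const_mx 1.

Definition diagv (R : realFieldType) (n : nat) (X : 'M[R]_n) : 'cV[R]_n :=
  \col_i X i i.

(* Feasibility for the program defining Schrijver's theta^+(G):
   X - x x^T psd, diag(X) = x, X_ij = 0 for [i,j] in E, X >= 0. *)
Definition theta_plus_feasible (R : realFieldType) (n : nat) (E : rel 'I_n)
    (X : 'M[R]_n) (x : 'cV[R]_n) : Prop :=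
  [/\ psd (X - x *m x^T),
      diagv X = x,
      (forall i j, E i j -> X i j = 0)
    & (forall i j, 0 <= X i j)].

Definition theta_plus_optimal (R : realFieldType) (n : nat) (E : rel 'I_n)
    (X : 'M[R]_n) (x : 'cV[R]_n) : Prop :=
  theta_plus_feasible E X x /\
  forall (Y : 'M[R]_n) (y : 'cV[R]_n), theta_plus_feasible E Y y -> \tr Y <= \tr X.

(* Main.v *)
Require Import Defs.
From mathcomp Require Import all_boot all_order all_algebra.
From mathcomp Require Import ring lra.
Import Order.TTheory GRing.Theory Num.Theory.
Local Open Scope ring_scope.

Section H.
Context {R : rcfType} {n : nat}.

Definition qf (A : 'M[R]_n) (u w : 'I_n -> R) :=
  \sum_i \sum_j u i * A i j * w j.

Lemma qf_mx (A : 'M[R]_n) (v : 'cV[R]_n) :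
  (v^T *m A *m v) 0 0 = qf A (fun i => v i 0) (fun i => v i 0).
Proof.
rewrite mxE /qf exchange_big /=; apply: eq_bigr => j _.
rewrite mxE mulr_suml; apply: eq_bigr => i _; by rewrite mxE.
Qed.

Lemma qf_sub (A : 'M[R]_n) (x : 'cV[R]_n) u :
  qf (A - x *m x^T) u u = qf A u u - (\sum_i x i 0 * u i) ^+ 2.
Proof.
rewrite /qf expr2 mulr_suml -sumrB; apply: eq_bigr => i _.
rewrite mulr_sumr -sumrB; apply: eq_bigr => j _.
rewrite !mxE big_ord1 !mxE; ring.
Qed.

Lemma qf_sym (A : 'M[R]_n) u w : (forall i j, A i j = A j i) ->
  qf A w u = qf A u w.
Proof.
move=> sym; rewrite /qf exchange_big; apply: eq_bigr => i _.
apply: eq_bigr => j _; rewrite sym; ring.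
Qed.

Lemma qf_expand (A : 'M[R]_n) u w a b : (forall i j, A i j = A j i) ->
  qf A (fun i => a * u i + b * w i) (fun i => a * u i + b * w i) =
  a ^+ 2 * qf A u u + 2 * a * b * qf A u w + b ^+ 2 * qf A w w.
Proof.
move=> sym; have h : qf A u w * 2 = qf A u w + qf A w u.
  by rewrite (qf_sym _ _ _ sym); ring.
have -> : 2 * a * b * qf A u w = a * b * (qf A u w + qf A w u) by rewrite -h; ring.
rewrite /qf -big_split /= !mulr_sumr -!big_split /=; apply: eq_bigr => i _.
rewrite -big_split /= !mulr_sumr -!big_split /=; apply: eq_bigr => j _; ring.
Qed.

Lemma qf_CS (A : 'M[R]_n) u w : (forall i j, A i j = A j i) ->
  (forall v, 0 <= qf A v v) ->
  qf A u w ^+ 2 <= qf A u u * qf A w w.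
Proof.
move=> sym pos.
set a := qf A w w; set b := qf A u w; set c := qf A u u.
have ha : 0 <= a by apply: pos.
have hc : 0 <= c by apply: pos.
have h1 := pos (fun i => a * u i + (- b) * w i).
have h2 := pos (fun i => (- b) * u i + c * w i).
have h3 := pos (fun i => 1 * u i + (- b) * w i).
rewrite qf_expand // -/a -/b -/c in h1.
rewrite qf_expand // -/a -/b -/c in h2.
rewrite qf_expand // -/a -/b -/c in h3.
have [a0|apos] := eqVneq a 0.
  have [c0|cpos] := eqVneq c 0.
    rewrite a0 c0 mulr0; move: h3; rewrite a0 c0; nra.
  have cp : 0 < c by rewrite lt_def cpos hc.
  rewrite a0 mulr0; move: h2; rewrite a0; nra.
have ap : 0 < a by rewrite lt_def apos ha.
nra.
Qed.

Lemma qf_ext (A : 'M[R]_n) u u' w w' : (forall i, u i = u' i) -> (forall i, w i = w' i) ->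
  qf A u w = qf A u' w'.
Proof.
move=> hu hw; rewrite /qf; apply: eq_bigr => i _; apply: eq_bigr => j _; by rewrite hu hw.
Qed.

Lemma sum_delta (F : 'I_n -> R) i : \sum_k (k == i)%:R * F k = F i.
Proof.
rewrite (bigD1 i) //= eqxx mul1r big1 ?addr0 // => k /negbTE ->; by rewrite mul0r.
Qed.

End H.

Theorem mainTheorem11 (R : rcfType) (n : nat) (E : rel 'I_n)
    (Xs : 'M[R]_n) (xs : 'cV[R]_n) :
  simple_graph E ->
  theta_plus_optimal E Xs xs ->
  Xs *m ones R n = \tr Xs *: diagv Xs.
Proof.
move=> _ [[psdX dX edX nnX] opt].
set X := Xs.
have xsE : forall i, xs i 0 = X i i.
  by move=> i; rewrite -dX mxE.
have symX : forall i j, X i j = X j i.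
  move=> i j; case: psdX => /matrixP /(_ j i) + _.
  rewrite !mxE !big_ord1 !mxE => h; move: h; rewrite !xsE (mulrC (X j j)) => h.
  rewrite /X; lra.
have posX : forall u, 0 <= qf X u u.
  move=> u; case: psdX => _ /(_ (\col_i u i)).
  rewrite qf_mx qf_sub.
  rewrite (@qf_ext _ _ _ _ u _ u) => [|i|i]; try by rewrite mxE.
  move=> h; apply: le_trans h _; rewrite lerBlDr lerDl; exact: sqr_ge0.
pose e := fun _ : 'I_n => (1 : R).
pose t := \sum_i X i i.
pose y := fun i => \sum_j X i j.
pose s := \sum_i y i.
have qfee : qf X e e = s.
  by rewrite /qf; apply: eq_bigr => i _; apply: eq_bigr => j _; rewrite mulr1 mul1r.
have qfew : forall w, qf X e w = \sum_j y j * w j.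
  move=> w; rewrite /qf exchange_big; apply: eq_bigr => j _.
  rewrite /y mulr_suml; apply: eq_bigr => i _; by rewrite mul1r symX.
have st : t ^+ 2 <= s.
  case: psdX => _ /(_ (\col_i e i)); rewrite qf_mx qf_sub.
  rewrite (@qf_ext _ _ _ _ e _ e) => [|i|i]; try by rewrite mxE.
  rewrite qfee subr_ge0.
  have -> : \sum_i xs i 0 * (\col_i0 e i0) i 0 = t by apply: eq_bigr => i _; rewrite xsE mxE mulr1.
  done.
have xge0 : forall i, 0 <= X i i by [].
have yge0 : forall i, 0 <= y i by move=> i; apply: sumr_ge0.
have rowz : forall i, X i i = 0 -> y i = 0.
  move=> i hi.
  pose d := fun k : 'I_n => (k == i)%:R : R.
  have h := qf_CS X d e symX posX.
  have hd : qf X d d = X i i.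
    rewrite /qf (eq_bigr (fun k => d k * \sum_j X k j * d j)); last first.
      by move=> k _; rewrite mulr_sumr; apply: eq_bigr => j _; rewrite mulrA.
    rewrite sum_delta (eq_bigr (fun j => d j * X i j)) ?sum_delta //.
    by move=> j _; rewrite mulrC.
  have hde : qf X d e = y i.
    rewrite /qf (eq_bigr (fun k => d k * \sum_j X k j)) ?sum_delta //.
    by move=> k _; rewrite mulr_sumr; apply: eq_bigr => j _; rewrite mulr1.
  rewrite hd hde hi mul0r in h.
  by apply/eqP; rewrite -sqrf_eq0 eq_le h sqr_ge0.
have t0 : 0 <= t by apply: sumr_ge0.
suff key : forall i, y i = t * X i i.
  apply/matrixP => i j; rewrite !mxE (ord1 j).
  rewrite (eq_bigr (fun k => X i k)); last by move=> k _; rewrite mxE mulr1.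
  exact: key.
have [tz|tpos] := eqVneq t 0.
  have xz : forall i, X i i = 0.
    by move=> i; move/eqP: tz; rewrite /t psumr_eq0 // => /allP /(_ i (mem_index_enum _)) /eqP.
  by move=> i; rewrite xz mulr0 rowz.
have tp : 0 < t by rewrite lt_def tpos t0.
have sp : 0 < s by apply: lt_le_trans st; rewrite exprn_gt0.
pose p := fun i => y i / X i i.
have pxy : forall i, p i * X i i = y i.
  move=> i; have [xi0|xin0] := eqVneq (X i i) 0.
    by rewrite xi0 mulr0 rowz.
  by rewrite /p divfK.
have pge0 : forall i, 0 <= p i by move=> i; apply: divr_ge0.
pose Y := \matrix_(i, j) (p i * p j * X i j / s).
have feas : theta_plus_feasible E Y (diagv Y).
  split => //.
  - split.
      apply/matrixP => i j; rewrite !mxE !big_ord1 !mxE.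
      rewrite symX; ring.
    move=> v; rewrite qf_mx qf_sub.
    set u := (fun i => v i 0).
    pose w := fun i => p i * u i.
    have hY : qf Y u u = qf X w w / s.
      rewrite /qf mulr_suml; apply: eq_bigr => i _; rewrite mulr_suml.
      apply: eq_bigr => j _; rewrite mxE /w; ring.
    have hy : \sum_i diagv Y i 0 * u i = qf X e w / s.
      rewrite qfew mulr_suml; apply: eq_bigr => i _.
      rewrite !mxE /w -(pxy i); ring.
    rewrite hY hy.
    have cs := qf_CS X e w symX posX; rewrite qfee in cs.
    have -> : qf X w w / s - (qf X e w / s) ^+ 2 =
              (s * qf X w w - qf X e w ^+ 2) / s ^+ 2.
      by field; rewrite gt_eqF.
    apply: divr_ge0; last exact: sqr_ge0.
    by rewrite subr_ge0.
  - by move=> i j /edX hij; rewrite mxE hij mulr0 mul0r.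
  - move=> i j; rewrite mxE; apply: divr_ge0; last exact: ltW. apply: mulr_ge0; [apply: mulr_ge0; apply: pge0 | apply: nnX].
have trY := opt _ _ feas.
have trYE : \tr Y = (\sum_i p i * y i) / s.
  rewrite /mxtrace mulr_suml; apply: eq_bigr => i _; rewrite mxE -(pxy i); ring.
rewrite trYE ler_pdivrMr // -/t in trY.
have hsum : \sum_i X i i * (p i - t) ^+ 2 =
            \sum_i p i * y i - 2 * t * s + t ^+ 2 * t.
  have -> : \sum_i X i i * (p i - t) ^+ 2 =
     \sum_i (p i * y i - 2 * t * y i + t ^+ 2 * X i i).
    by apply: eq_bigr => i _; rewrite -(pxy i); ring.
  rewrite big_split /= sumrB /s /t !mulr_sumr. done.
have hle : \sum_i X i i * (p i - t) ^+ 2 <= 0.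
  have trt : \tr Xs = t by []. rewrite trt in trY.
  have hp : 0 <= t * (s - t ^+ 2) by rewrite mulr_ge0 ?subr_ge0 // ltW.
  rewrite hsum; nra.
have hz : \sum_i X i i * (p i - t) ^+ 2 = 0.
  by apply/eqP; rewrite eq_le hle sumr_ge0 // => i _; rewrite mulr_ge0 ?sqr_ge0.
move/eqP: hz; rewrite psumr_eq0; last by move=> i _; rewrite mulr_ge0 ?sqr_ge0.
move=> /allP hall i.
move: (hall i (mem_index_enum _)); rewrite implyTb mulf_eq0 sqrf_eq0 subr_eq0.
case/orP => [/eqP xi0|/eqP pt]; first by rewrite xi0 mulr0 rowz.
by rewrite -(pxy i) pt mulrC.
Qed.
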